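(* Let $n\geq2$, $H=\{x\in\mathbb{R}^{n+1}:\sum_i x_i=0\}$, $p_H$ the orthogonal projection onto $H$, $V_0=\{0,1\}^{n+1}\setminus\{(0,\dots,0),(1,\dots,1)\}$, $V_{\mathcal{P}}=p_H(V_0)$ (the vertex set of the Voronoi region of $A_n=\mathbb{Z}^{n+1}\cap H$), and let $\tilde G$ be the Cayley graph on $\frac12p_H(\mathbb{Z}^{n+1})$ with generating set $\frac12V_{\mathcal{P}}$. Then the cliques of $\tilde G$ containing $0$ are exactly the sets of the form $\{0,\frac{p_H(u_1)}{2},\dots,\frac{p_H(u_s)}{2}\}$ with $u_1,\dots,u_s$ distinct elements of $V_0$ whose supports $I_i=\{j:(u_i)_j=1\}$ satisfy $I_1\subset I_2\subset\cdots\subset I_s$. In particular, a clique of $\tilde G$ contains at most $n+1$ vertices.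
   Context: In the Cayley graph, $x,y$ are adjacent iff $x-y\in\frac12V_{\mathcal{P}}$. A clique is a set of vertices any two distinct elements of which are adjacent. *)

(* Defs.v *)
From HB Require Import structures.
From mathcomp Require Import all_boot all_order all_algebra.
From mathcomp Require Import reals.
Set Implicit Arguments. Unset Strict Implicit. Unset Printing Implicit Defensive.
Import Order.TTheory GRing.Theory Num.Theory.
Local Open Scope ring_scope.

Definition pH (R : realType) (n : nat) (x : 'rV[R]_n.+1) : 'rV[R]_n.+1 :=
  x - ((\sum_i x 0 i) / (n.+1)%:R) *: const_mx 1.

Definition inV0 (R : realType) (n : nat) (u : 'rV[R]_n.+1) : Prop :=
  (forall i, u 0 i = 0 \/ u 0 i = 1) /\ u <> 0 /\ u <> const_mx 1.

Definition supp (R : realType) (n : nat) (u : 'rV[R]_n.+1) : {set 'I_n.+1} :=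
  [set j | u 0 j == 1].

Definition is_vertex (R : realType) (n : nat) (x : 'rV[R]_n.+1) : Prop :=
  exists z : 'rV[int]_n.+1, x = 2^-1 *: pH (map_mx intr z).

Definition adj (R : realType) (n : nat) (x y : 'rV[R]_n.+1) : Prop :=
  exists u, inV0 u /\ x - y = 2^-1 *: pH u.

Definition is_clique (R : realType) (n : nat) (C : 'rV[R]_n.+1 -> Prop) : Prop :=
  (forall x, C x -> is_vertex x) /\
  (forall x y, C x -> C y -> x <> y -> adj x y).

(* Main.v *)
Require Import Defs.
From HB Require Import structures.
From mathcomp Require Import all_boot all_order all_algebra.
From mathcomp Require Import reals.
From mathcomp Require Import boolp.
From mathcomp Require Import ring lra.
Import Order.TTheory GRing.Theory Num.Theory.
Local Open Scope ring_scope.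

Definition ind (R : realType) (n : nat) (S : {set 'I_n.+1}) : 'rV[R]_n.+1 :=
  \row_j ((j \in S)%:R).
Arguments ind R {n} S.

Lemma sumvB (R : realType) n (x y : 'rV[R]_n.+1) :
  \sum_i (x - y) 0 i = \sum_i x 0 i - \sum_i y 0 i.
Proof. rewrite -sumrB; apply: eq_bigr => i _; by rewrite !mxE. Qed.

Lemma pHB (R : realType) n (x y : 'rV[R]_n.+1) : pH (x - y) = pH x - pH y.
Proof.
rewrite /pH sumvB mulrBl scalerBl.
apply/matrixP => i j; rewrite !mxE. ring.
Qed.

Lemma pH1 (R : realType) n : pH (const_mx 1 : 'rV[R]_n.+1) = 0.
Proof.
rewrite /pH (eq_bigr (fun _ => 1)) => [|i _]; last by rewrite mxE.
rewrite sumr_const card_ord divff ?scale1r ?subrr // pnatr_eq0 //.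
Qed.

Lemma pH0 (R : realType) n (x : 'rV[R]_n.+1) : pH x = 0 -> forall i j, x 0 i = x 0 j.
Proof.
move/matrixP=> H i j; have := H 0 i; have := H 0 j; rewrite !mxE.
set c := (_ / _); rewrite mulr1 => /eqP; rewrite subr_eq0 => /eqP ->.
by move=> /eqP; rewrite subr_eq0 => /eqP ->.
Qed.

Lemma ind_supp (R : realType) n (u : 'rV[R]_n.+1) : inV0 u -> u = ind R (supp u).
Proof.
case=> H _; apply/matrixP => i j; rewrite (ord1 i) !mxE inE.
by case: (H j) => ->; rewrite ?eqxx // eq_sym oner_eq0.
Qed.

Lemma supp_ind (R : realType) n (S : {set 'I_n.+1}) : supp (ind R S) = S.
Proof.
apply/setP => j; rewrite inE mxE; case: (j \in S); rewrite ?eqxx //.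
by rewrite eq_sym oner_eq0.
Qed.

Lemma ind_inV0 (R : realType) n (S : {set 'I_n.+1}) :
  S != set0 -> S != setT -> inV0 (ind R S).
Proof.
move=> /set0Pn [i iS] ST; split; [|split].
- by move=> j; rewrite mxE; case: (j \in S); [right|left].
- move/matrixP => /(_ 0 i); rewrite !mxE iS => /eqP; by rewrite oner_eq0.
- move/matrixP => H; move/negP: ST; apply; apply/eqP/setP => j.
  have := H 0 j; rewrite !mxE inE; case: (j \in S) => //= /eqP.
  by rewrite eq_sym oner_eq0.
Qed.

Lemma pH_ind_inj (R : realType) n (S T : {set 'I_n.+1}) :
  S != setT -> T != setT -> pH (ind R S) = pH (ind R T) -> S = T.
Proof.
move=> ST TT /eqP; rewrite -subr_eq0 -pHB => /eqP /pH0 H.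
apply/setP => j; case hS: (j \in S); case hT: (j \in T) => //.
- move/negP: ST; case; apply/eqP/setP => k; rewrite inE.
  have := H k j; rewrite !mxE hS hT; case: (k \in S); case: (k \in T) => //=; lra.
- move/negP: TT; case; apply/eqP/setP => k; rewrite inE.
  have := H k j; rewrite !mxE hS hT; case: (k \in S); case: (k \in T) => //=; lra.
Qed.

Lemma comp_ind (R : realType) n (S T W : {set 'I_n.+1}) :
  pH (ind R S) - pH (ind R T) = pH (ind R W) -> (S \subset T) || (T \subset S).
Proof.
move=> /eqP; rewrite -subr_eq0 -!pHB => /eqP /pH0 H.
case: (boolP (S \subset T)) => //= /subsetPn [i iS iT].
apply/subsetP => j jT; apply/negPn/negP => jS.
have := H i j; rewrite !mxE (negbTE iT) (negbTE jS) iS jT.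
case: (i \in W); case: (j \in W) => /=; lra.
Qed.

Lemma pHzero (R : realType) n : pH (0 : 'rV[R]_n.+1) = 0.
Proof. by have := @pHB R n 0 0; rewrite !subrr. Qed.

Lemma ind0 (R : realType) n : ind R (set0 : {set 'I_n.+1}) = 0.
Proof. by apply/matrixP => i j; rewrite !mxE in_set0. Qed.

Lemma indT (R : realType) n : ind R (setT : {set 'I_n.+1}) = const_mx 1.
Proof. by apply/matrixP => i j; rewrite !mxE in_setT. Qed.

Lemma inV0_prop (R : realType) n (S : {set 'I_n.+1}) :
  inV0 (ind R S) -> S != set0 /\ S != setT.
Proof.
case=> _ [h1 h2]; split; apply/negP => /eqP E; subst S.
- by rewrite ind0 in h1.
- by rewrite indT in h2.
Qed.

Lemma vertex_ind (R : realType) n (S : {set 'I_n.+1}) :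
  is_vertex (2^-1 *: pH (ind R S)).
Proof.
exists (\row_j ((j \in S) : nat)%:Z); congr (_ *: pH _).
by apply/matrixP => i j; rewrite !mxE pmulrn.
Qed.

Lemma vertex0 (R : realType) n : is_vertex (0 : 'rV[R]_n.+1).
Proof.
exists 0; have -> : map_mx intr (0:'rV[int]_n.+1) = 0 :> 'rV[R]_n.+1.
  by apply/matrixP => i j; rewrite !mxE.
by rewrite pHzero scaler0.
Qed.

Lemma adj_sym (R : realType) n (x y : 'rV[R]_n.+1) : adj x y -> adj y x.
Proof.
case=> w [[h0 [h1 h2]] E]; exists (const_mx 1 - w); split; [split; [|split]|].
- by move=> i; rewrite !mxE; case: (h0 i) => ->; [right|left]; rewrite ?subr0 ?subrr.
- by move/eqP; rewrite subr_eq0 => /eqP E'; apply: h2.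
- by move/eqP; rewrite -subr_eq0 addrAC subrr add0r oppr_eq0 => /eqP.
- by rewrite pHB pH1 sub0r scalerN -E opprB.
Qed.

Lemma two_neq0 (R : realType) : (2^-1 : R) != 0.
Proof. by rewrite invr_eq0 pnatr_eq0. Qed.

Lemma adj_ind (R : realType) n (S T : {set 'I_n.+1}) (w : 'rV[R]_n.+1) :
  inV0 w -> 2^-1 *: pH (ind R S) - 2^-1 *: pH (ind R T) = 2^-1 *: pH w ->
  (S \subset T) || (T \subset S).
Proof.
move=> hw; rewrite -scalerBr => /(scalerI (two_neq0 R)).
rewrite (@ind_supp R n w hw); exact: comp_ind.
Qed.

Lemma adj_back (R : realType) n (S T : {set 'I_n.+1}) :
  S \subset T -> S != T -> T != setT ->
  adj (2^-1 *: pH (ind R T)) (2^-1 *: pH (ind R S)).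
Proof.
move=> ST nST TT; exists (ind R (T :\: S)); split.
  apply: ind_inV0.
  - apply/negP => /eqP E; move/negP: nST; apply; rewrite eqEsubset ST /=.
    by rewrite -setD_eq0 E.
  - apply/negP => /eqP E; move/negP: TT; apply; rewrite eqEsubset subsetT /=.
    by rewrite -E subsetDl.
rewrite -scalerBr -pHB; congr (_ *: pH _); apply/matrixP => i j; rewrite !mxE inE.
case hT: (j \in T); case hS: (j \in S) => /=; rewrite ?subrr ?subr0 //.
by move/subsetP: ST => /(_ j hS); rewrite hT.
Qed.

Lemma chain_card (n : nat) (D : {set {set 'I_n.+1}}) :
  (forall S, S \in D -> S != set0 /\ S != setT) ->
  (forall S T, S \in D -> T \in D -> (S \subset T) || (T \subset S)) ->
  (#|D| <= n)%N.
Proof.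
move=> hD hC.
have cS : forall S, S \in D -> (0 < #|S| < n.+1)%N.
  move=> S /hD [h1 h2]; rewrite card_gt0 h1 /=.
  by have := proper_card (eq_ind _ (fun b => is_true b) h2 _ (esym (properT S))); rewrite cardsT card_ord.
have inj : {in D &, injective (fun S : {set 'I_n.+1} => inord #|S| : 'I_n.+1)}.
  move=> S T SD TD /(congr1 val) /=.
  have lS : (#|S| < n.+1)%N by case/andP: (cS S SD).
  have lT : (#|T| < n.+1)%N by case/andP: (cS T TD).
  rewrite !inordK // => E; case/orP: (hC S T SD TD) => h.
  - by apply/eqP; rewrite eqEcard h E leqnn.
  - by apply/esym/eqP; rewrite eqEcard h E leqnn.
rewrite -(card_in_imset inj).
apply: (@leq_trans #|[set~ (ord0 : 'I_n.+1)]|); last by rewrite cardsC1 card_ord.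
apply: subset_leq_card; apply/subsetP => k /imsetP [S SD ->].
rewrite !inE; apply/negP => /eqP /(congr1 val) /=; rewrite inordK.
  by case/andP: (cS S SD) => /[swap] _; case: #|S|.
by case/andP: (cS S SD).
Qed.

Definition Dset (R : realType) n (C : 'rV[R]_n.+1 -> Prop) (x0 : 'rV[R]_n.+1)
  : {set {set 'I_n.+1}} :=
  [set S | (S != set0) && (S != setT) && `[< C (x0 + 2^-1 *: pH (ind R S)) >]].
Arguments Dset {R n} C x0.

Lemma D_prop (R : realType) n (C : 'rV[R]_n.+1 -> Prop) x0 S :
  S \in Dset C x0 -> [/\ S != set0, S != setT & C (x0 + 2^-1 *: pH (ind R S))].
Proof. by rewrite inE => /andP [/andP [h1 h2] /asboolP h3]. Qed.

Lemma D_cover (R : realType) n (C : 'rV[R]_n.+1 -> Prop) x0 y :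
  is_clique C -> C x0 -> C y ->
  y = x0 \/ exists2 S, S \in Dset C x0 & y = x0 + 2^-1 *: pH (ind R S).
Proof.
move=> [_ hC] Cx0 Cy; case: (eqVneq y x0) => [->|ne]; [by left|right].
have [w [hw E]] := hC _ _ Cy Cx0 (fun e => negP ne (introT eqP e)).
have Ey : y = x0 + 2^-1 *: pH (ind R (supp w)).
  by rewrite -(@ind_supp R n w hw) -E addrC subrK.
exists (supp w) => //.
have [h1 h2] := @inV0_prop R n _ (eq_ind _ (fun v => inV0 v) hw _ (@ind_supp R n w hw)).
by rewrite inE h1 h2 /=; apply/asboolP; rewrite -Ey.
Qed.

Lemma D_chain (R : realType) n (C : 'rV[R]_n.+1 -> Prop) x0 S T :
  is_clique C -> S \in Dset C x0 -> T \in Dset C x0 ->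
  (S \subset T) || (T \subset S).
Proof.
move=> [_ hC] /D_prop [s1 s2 s3] /D_prop [t1 t2 t3].
case: (eqVneq S T) => [->|ne]; first by rewrite subxx.
have ne' : x0 + 2^-1 *: pH (ind R S) <> x0 + 2^-1 *: pH (ind R T).
  move/addrI/(scalerI (two_neq0 R))/(@pH_ind_inj R n _ _ s2 t2) => E.
  by rewrite E eqxx in ne.
have [w [hw E]] := hC _ _ s3 t3 ne'.
apply: (@adj_ind R n S T w hw); rewrite -E opprD addrACA subrr add0r //.
Qed.
Arguments D_prop {R n C x0 S}.
Arguments D_cover {R n C x0 y}.
Arguments D_chain {R n C x0 S T}.
Arguments supp_ind {R n}.
Arguments ind_inV0 {R n S}.
Arguments adj_back {R n S T}.
Arguments vertex_ind {R n}.
Arguments vertex0 {R n}.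
Arguments adj_sym {R n x y}.

Lemma inV0_supp (R : realType) n (u : 'rV[R]_n.+1) :
  inV0 u -> supp u != set0 /\ supp u != setT.
Proof.
move=> hu; apply: (@inV0_prop R n).
by rewrite -(@ind_supp R n u hu).
Qed.
Arguments inV0_supp {R n u}.

Theorem lemma11 (R : realType) (n : nat) (hn : (2 <= n)%N) :
  (forall C : 'rV[R]_n.+1 -> Prop,
     (is_clique C /\ C 0) <->
     exists (s : nat) (u : 'I_s -> 'rV[R]_n.+1),
       injective u /\
       (forall i, inV0 (u i)) /\
       (forall i j : 'I_s, (i <= j)%N -> supp (u i) \subset supp (u j)) /\
       (forall x, C x <-> (x = 0 \/ exists i, x = 2^-1 *: pH (u i)))) /\
  (forall C : 'rV[R]_n.+1 -> Prop, is_clique C ->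
     exists l : seq 'rV[R]_n.+1, (size l <= n.+1)%N /\ (forall x, C x -> x \in l)).
Proof.
split.
  move=> C; split.
  - case=> hcl C0.
    set D := Dset C 0.
    pose leT := fun S T : {set 'I_n.+1} => (#|S| <= #|T|)%N.
    set L := sort leT (enum D).
    have Lu : uniq L by rewrite sort_uniq enum_uniq.
    have LD : forall S, (S \in L) = (S \in D) by move=> S; rewrite mem_sort mem_enum.
    have Ls : sorted leT L by apply: sort_sorted => S T; exact: leq_total.
    have nthD : forall i : 'I_(size L), nth set0 L i \in D by move=> i; rewrite -LD mem_nth.
    exists (size L), (fun i => ind R (nth set0 L i)); split; [|split; [|split]].
    + move=> i j /(congr1 (@supp R n)); rewrite !supp_ind => /eqP.
      by rewrite nth_uniq // => /eqP /val_inj.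
    + move=> i; have [h1 h2 _] := D_prop (nthD i); exact: ind_inV0.
    + move=> i j ij; rewrite !supp_ind.
      have le : leT (nth set0 L i) (nth set0 L j).
        have tr : transitive leT by move=> y x z; exact: leq_trans.
        have rf : reflexive leT by move=> y; exact: leqnn.
        have := sorted_leq_nth tr rf set0 Ls; move/(_ i j); apply => //; by rewrite inE.
      case/orP: (D_chain hcl (nthD i) (nthD j)) => // h.
      have /eqP -> : nth set0 L j == nth set0 L i by rewrite eqEcard h; exact: le.
      exact: subxx.
    + move=> x; split.
      * move=> Cx; case: (D_cover hcl C0 Cx) => [->|[S SD ->]]; [by left|right].
        have iL : (index S L < size L)%N by rewrite index_mem LD.
        by exists (Ordinal iL) => /=; rewrite nth_index ?LD // add0r.
      * case=> [->|[i ->]] //.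
        by have [_ _ h] := D_prop (nthD i); rewrite add0r in h.
  - case=> s [u [ui [uV [um hC]]]].
    have C0 : C 0 by apply/hC; left.
    split => //; split.
    + move=> x /hC [->|[i ->]]; first exact: vertex0.
      rewrite (@ind_supp R n _ (uV i)); exact: vertex_ind.
    + have key : forall i j : 'I_s, (i <= j)%N ->
          2^-1 *: pH (u i) <> 2^-1 *: pH (u j) ->
          adj (2^-1 *: pH (u j)) (2^-1 *: pH (u i)).
        move=> i j ij ne.
        have [_ hT] := inV0_supp (uV j).
        rewrite (@ind_supp R n _ (uV i)) (@ind_supp R n _ (uV j)) in ne *.
        apply: adj_back => //; first exact: um.
        by apply/negP => /eqP E; apply: ne; rewrite E.
      have key0 : forall i, adj (2^-1 *: pH (u i)) 0.
        by move=> i; exists (u i); split => //; rewrite subr0.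
      move=> x y /hC [->|[i ->]] /hC [->|[j ->]] ne.
      * by case: ne.
      * by apply: adj_sym; exact: key0.
      * exact: key0.
      * case: (leqP i j) => ij.
          by apply: adj_sym; apply: key.
        apply: key; first exact: ltnW.
        by move=> e; apply: ne; rewrite e.
move=> C hcl; case: (pselect (exists x0, C x0)) => [[x0 Cx0]|nC]; last first.
  by exists [::]; split => // x Cx; case: nC; exists x.
exists (x0 :: [seq x0 + 2^-1 *: pH (ind R A) | A <- enum (Dset C x0)]); split.
  rewrite /= size_map -cardE ltnS; apply: chain_card.
  - by move=> S /D_prop [h1 h2 _]; split.
  - by move=> S T; apply: D_chain.
move=> x Cx; case: (D_cover hcl Cx0 Cx) => [->|[S SD ->]]; first exact: mem_head.
by rewrite inE; apply/orP; right; apply: map_f; rewrite mem_enum.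
Qed.
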